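(* Let $\mathbb H$ be the real quaternion algebra and $f(z)=z^n+a_{n-1}z^{n-1}+\dots+a_1z+a_0$ with $a_0,\dots,a_{n-1}\in\mathbb H$, $a_0\neq0$, evaluated as $f(z_0)=z_0^n+a_{n-1}z_0^{n-1}+\dots+a_0$. Set $a_n=1$ and define polynomials in commuting real-central variables $r,N$ with quaternion coefficients $$g(r,N)=\sum_{k=1}^n a_k\sum_{m=0}^{\lfloor (k-1)/2\rfloor}\binom{k}{2m+1}(-1)^mN^mr^{k-2m-1},\qquad h(r,N)=a_0+\sum_{k=1}^n a_k\sum_{m=0}^{\lfloor k/2\rfloor}\binom{k}{2m}(-1)^mN^mr^{k-2m}.$$ For $z_0\in\mathbb H$ let $r_0=\Re(z_0)$, $x_0=\Im(z_0)$, $N_0=-x_0^2$. Then $z_0$ is a root of $f$ if and only if one of the following holds: (1) $g(r_0,N_0)=h(r_0,N_0)=0$; or (2) $(r_0,N_0)$ satisfies $-g(r,N)\overline{g(r,N)}g(r,N)N=h(r,N)\overline{g(r,N)}h(r,N)$ and $x_0=-g(r_0,N_0)^{-1}h(r_0,N_0)$.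
   Context: For $q=c_1+c_2i+c_3j+c_4k\in\mathbb H$: $\Re(q)=c_1$, $\Im(q)=q-\Re(q)$, $\bar q=\Re(q)-\Im(q)$. For a polynomial $p(r,N)$ with quaternion coefficients, $\overline{p(r,N)}$ is obtained by conjugating the coefficients. With these $g,h$ one has $f(z_0)=g(r_0,N_0)x_0+h(r_0,N_0)$. *)

(* Defs.v *)
From mathcomp Require Import all_boot all_order all_algebra.
From mathcomp Require Import reals.
Set Implicit Arguments. Unset Strict Implicit. Unset Printing Implicit Defensive.
Import Order.TTheory GRing.Theory Num.Theory.
Local Open Scope ring_scope.

Section Quat.
Variable R : realType.

(* q = c1 + c2 i + c3 j + c4 k *)
Record quat := Quat { qc1 : R; qc2 : R; qc3 : R; qc4 : R }.

Definition qzero : quat := Quat 0 0 0 0.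
Definition qone : quat := Quat 1 0 0 0.
Definition qreal (r : R) : quat := Quat r 0 0 0.
Definition qadd (p q : quat) : quat :=
  Quat (qc1 p + qc1 q) (qc2 p + qc2 q) (qc3 p + qc3 q) (qc4 p + qc4 q).
Definition qopp (p : quat) : quat := Quat (- qc1 p) (- qc2 p) (- qc3 p) (- qc4 p).
(* Hamilton product: i^2 = j^2 = k^2 = ijk = -1 *)
Definition qmul (p q : quat) : quat :=
  Quat (qc1 p * qc1 q - qc2 p * qc2 q - qc3 p * qc3 q - qc4 p * qc4 q)
       (qc1 p * qc2 q + qc2 p * qc1 q + qc3 p * qc4 q - qc4 p * qc3 q)
       (qc1 p * qc3 q - qc2 p * qc4 q + qc3 p * qc1 q + qc4 p * qc2 q)
       (qc1 p * qc4 q + qc2 p * qc3 q - qc3 p * qc2 q + qc4 p * qc1 q).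
Definition qRe (q : quat) : R := qc1 q.
Definition qIm (q : quat) : quat := qadd q (qopp (qreal (qRe q))).
Definition qconj (q : quat) : quat := qadd (qreal (qRe q)) (qopp (qIm q)).
Definition qnorm2 (q : quat) : R := qc1 q ^+ 2 + qc2 q ^+ 2 + qc3 q ^+ 2 + qc4 q ^+ 2.
(* multiplicative inverse conj(q)/|q|^2 (only meaningful for q <> 0) *)
Definition qinv (q : quat) : quat := qmul (qreal (qnorm2 q)^-1) (qconj q).
Definition qpow (z : quat) (k : nat) : quat := iter k (qmul z) qone.

(* monic polynomial f(z) = z^n + a_{n-1} z^{n-1} + ... + a_0, coefficients
   on the left; a_n := 1 *)
Definition coef (n : nat) (a : nat -> quat) (k : nat) : quat :=
  if (k < n)%N then a k else qone.
Definition feval (n : nat) (a : nat -> quat) (z : quat) : quat :=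
  qadd (qpow z n) (\big[qadd/qzero]_(k < n) qmul (a k) (qpow z k)).

Definition gscal (k : nat) (r N : R) : R :=
  \sum_(0 <= m < (k.-1)./2.+1)
     'C(k, (2 * m).+1)%:R * (-1) ^+ m * N ^+ m * r ^+ (k - (2 * m).+1).
Definition hscal (k : nat) (r N : R) : R :=
  \sum_(0 <= m < k./2.+1)
     'C(k, 2 * m)%:R * (-1) ^+ m * N ^+ m * r ^+ (k - 2 * m).

(* g, h and the coefficient-conjugated polynomial gbar, evaluated at
   real values r, N of the central variables *)
Definition gpol (n : nat) (a : nat -> quat) (r N : R) : quat :=
  \big[qadd/qzero]_(1 <= k < n.+1) qmul (coef n a k) (qreal (gscal k r N)).
Definition gbarpol (n : nat) (a : nat -> quat) (r N : R) : quat :=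
  \big[qadd/qzero]_(1 <= k < n.+1) qmul (qconj (coef n a k)) (qreal (gscal k r N)).
Definition hpol (n : nat) (a : nat -> quat) (r N : R) : quat :=
  qadd (a 0%N) (\big[qadd/qzero]_(1 <= k < n.+1) qmul (coef n a k) (qreal (hscal k r N))).

End Quat.

(* Main.v *)
From HB Require Import structures.
Require Import Defs.
From mathcomp Require Import all_boot all_order all_algebra.
From mathcomp Require Import reals.
From mathcomp Require Import ring lra zify.
From Stdlib Require Import Classical.
Import Order.TTheory GRing.Theory Num.Theory.
Set Implicit Arguments. Unset Strict Implicit.
Local Open Scope ring_scope.

Definition gs (R : realType) (K k : nat) (r N : R) : R :=
  \sum_(0 <= m < K) 'C(k, (2 * m).+1)%:R * (-1) ^+ m * N ^+ m * r ^+ (k - (2 * m).+1).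
Definition hs (R : realType) (K k : nat) (r N : R) : R :=
  \sum_(0 <= m < K) 'C(k, 2 * m)%:R * (-1) ^+ m * N ^+ m * r ^+ (k - 2 * m).

Lemma sum_ext (R : realType) (F : nat -> R) b K : (b <= K)%N ->
  (forall m, (b <= m)%N -> F m = 0) ->
  \sum_(0 <= m < b) F m = \sum_(0 <= m < K) F m.
Proof.
move=> bK F0; elim: K bK => [|K IH]; first by rewrite leqn0 => /eqP->.
rewrite leq_eqVlt => /orP[/eqP->//|]; rewrite ltnS => bK.
by rewrite big_nat_recr //= F0 // addr0 IH.
Qed.

Lemma gscal_gs (R : realType) k K (r N : R) : (k < K)%N -> gscal k r N = gs K k r N.
Proof.
move=> kK; apply: sum_ext.
  have := odd_double_half k.-1; rewrite -muln2; lia.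
move=> m hm; rewrite bin_small ?mul0r //.
have := odd_double_half k.-1; rewrite -muln2; lia.
Qed.

Lemma hscal_hs (R : realType) k K (r N : R) : (k < K)%N -> hscal k r N = hs K k r N.
Proof.
move=> kK; apply: sum_ext.
  have := odd_double_half k; rewrite -muln2; lia.
move=> m hm; rewrite bin_small ?mul0r //.
have := odd_double_half k; rewrite -muln2; lia.
Qed.

Lemma gs_rec (R : realType) K k (r N : R) : gs K k.+1 r N = r * gs K k r N + hs K k r N.
Proof.
rewrite /gs /hs mulr_sumr -big_split /=; apply: eq_bigr => m _.
rewrite binS natrD subSS; case: (ltnP k (2 * m).+1) => hk.
  rewrite (bin_small hk); ring.
have -> : (k - 2 * m = (k - (2 * m).+1).+1)%N by lia.
rewrite exprS; ring.
Qed.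

Lemma hs_rec (R : realType) K k (r N : R) :
  hs K.+1 k.+1 r N = r * hs K.+1 k r N - N * gs K k r N.
Proof.
rewrite /hs /gs big_nat_recl // [in RHS]big_nat_recl //.
rewrite mulrDr !mulr_sumr -addrA -sumrB; congr (_ + _).
  by rewrite !bin0 !subn0 exprS; ring.
apply: eq_bigr => m _.
have -> : (2 * m.+1 = ((2 * m).+1).+1)%N by lia.
rewrite binS natrD subSS; case: (ltnP k ((2 * m).+1).+1) => hk.
  rewrite (bin_small hk) !exprS; ring.
have -> : (k - (2 * m).+1 = (k - ((2 * m).+1).+1).+1)%N by lia.
rewrite !exprS; ring.
Qed.

Ltac qunf := cbv [qconj qIm qRe qadd qopp qreal qmul qzero qone qinv qnorm2 qc1 qc2 qc3 qc4].

Lemma gscal0 (R : realType) (r N : R) : gscal 0 r N = 0.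
Proof. by rewrite /gscal big_nat1 /= !mul0r. Qed.
Lemma hscal0 (R : realType) (r N : R) : hscal 0 r N = 1.
Proof. by rewrite /hscal big_nat1 /= !mulr1. Qed.
Lemma gscalS (R : realType) k (r N : R) :
  gscal k.+1 r N = r * gscal k r N + hscal k r N.
Proof. by rewrite !(gscal_gs (K := k.+2)) // (hscal_hs (K := k.+2)) // gs_rec. Qed.
Lemma hscalS (R : realType) k (r N : R) :
  hscal k.+1 r N = r * hscal k r N - N * gscal k r N.
Proof.
rewrite (hscal_hs (K := k.+3)) // hs_rec.
rewrite -(gscal_gs (K := k.+2) r N) // -(hscal_hs (K := k.+3) r N).
all: by [] || lia.
Qed.

Lemma quatP (R : realType) (u v : quat R) : qc1 u = qc1 v -> qc2 u = qc2 v ->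
  qc3 u = qc3 v -> qc4 u = qc4 v -> u = v.
Proof. by case: u; case: v => /= ? ? ? ? ? ? ? ? -> -> -> ->. Qed.

Lemma qpow_formula (R : realType) (r p q s : R) k :
  qpow (Quat r p q s) k =
  Quat (hscal k r (p^+2+q^+2+s^+2)) (gscal k r (p^+2+q^+2+s^+2) * p)
       (gscal k r (p^+2+q^+2+s^+2) * q) (gscal k r (p^+2+q^+2+s^+2) * s).
Proof.
elim: k => [|k IH]; first by rewrite /= gscal0 hscal0 !mul0r.
rewrite /qpow iterS -/(qpow _ k) IH gscalS hscalS /qmul /=.
congr Quat; ring.
Qed.

Section Big.
Variable R : realType.
Lemma qc1_big I (r : seq I) P (F : I -> quat R) :
  qc1 (\big[@qadd R/qzero R]_(i <- r | P i) F i) = \sum_(i <- r | P i) qc1 (F i).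
Proof. by rewrite (big_morph (@qc1 R) (id1 := 0) (op1 := +%R)). Qed.
Lemma qc2_big I (r : seq I) P (F : I -> quat R) :
  qc2 (\big[@qadd R/qzero R]_(i <- r | P i) F i) = \sum_(i <- r | P i) qc2 (F i).
Proof. by rewrite (big_morph (@qc2 R) (id1 := 0) (op1 := +%R)). Qed.
Lemma qc3_big I (r : seq I) P (F : I -> quat R) :
  qc3 (\big[@qadd R/qzero R]_(i <- r | P i) F i) = \sum_(i <- r | P i) qc3 (F i).
Proof. by rewrite (big_morph (@qc3 R) (id1 := 0) (op1 := +%R)). Qed.
Lemma qc4_big I (r : seq I) P (F : I -> quat R) :
  qc4 (\big[@qadd R/qzero R]_(i <- r | P i) F i) = \sum_(i <- r | P i) qc4 (F i).
Proof. by rewrite (big_morph (@qc4 R) (id1 := 0) (op1 := +%R)). Qed.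
End Big.

Lemma qaddA (R : realType) : associative (@qadd R).
Proof. by move=> [? ? ? ?] [? ? ? ?] [? ? ? ?]; rewrite /qadd /=; congr Quat; ring. Qed.
Lemma qaddC (R : realType) : commutative (@qadd R).
Proof. by move=> [? ? ? ?] [? ? ? ?]; rewrite /qadd /=; congr Quat; ring. Qed.
Lemma qadd0 (R : realType) : left_id (qzero R) (@qadd R).
Proof. by move=> [? ? ? ?]; rewrite /qadd /=; congr Quat; ring. Qed.
HB.instance Definition _ (R : realType) :=
  Monoid.isComLaw.Build (quat R) (qzero R) (@qadd R) (@qaddA R) (@qaddC R) (@qadd0 R).

Lemma feval_sum (R : realType) n (a : nat -> quat R) z :
  feval n a z = \big[@qadd R/qzero R]_(0 <= k < n.+1) qmul (coef n a k) (qpow z k).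
Proof.
rewrite /feval big_nat_recr //= {2}/coef ltnn big_mkord.
rewrite (eq_bigr (fun k : 'I_n => qmul (coef n a k) (qpow z k))); last first.
  by move=> i _; rewrite /coef ltn_ord.
apply: quatP; rewrite /= ?(qc1_big, qc2_big, qc3_big, qc4_big); ring.
Qed.

Lemma qconj_big (R : realType) I (r : seq I) P (F : I -> quat R) :
  qconj (\big[@qadd R/qzero R]_(i <- r | P i) F i) =
  \big[@qadd R/qzero R]_(i <- r | P i) qconj (F i).
Proof.
apply: (big_morph _ _ _).
  by move=> [? ? ? ?] [? ? ? ?]; qunf; congr Quat; ring.
qunf; congr Quat; ring.
Show.

Qed.

Lemma gbar_conj (R : realType) n (a : nat -> quat R) r N :
  gbarpol n a r N = qconj (gpol n a r N).
Proof.
rewrite /gbarpol /gpol qconj_big; apply: eq_bigr => k _.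
by case: (coef n a k) => ? ? ? ?; qunf; congr Quat; ring.
Qed.

Lemma decomp (R : realType) n (a : nat -> quat R) (r p q s : R) : (0 < n)%N ->
  feval n a (Quat r p q s) =
  qadd (qmul (gpol n a r (p^+2+q^+2+s^+2)) (qIm (Quat r p q s)))
       (hpol n a r (p^+2+q^+2+s^+2)).
Proof.
move=> hn; rewrite feval_sum; under eq_bigr do rewrite qpow_formula.
rewrite big_nat_recl // gscal0 hscal0 /gpol /hpol !big_add1 /=.
have -> : coef n a 0 = a 0 by rewrite /coef hn.
apply: quatP => /=; rewrite ?(qc1_big, qc2_big, qc3_big, qc4_big) /=.
all: rewrite [RHS]addrCA; congr (_ + _); first by ring.
all: rewrite !mulr_suml -!sumrN -!big_split /=; apply: eq_bigr => i _; ring.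
Qed.

Lemma qnorm2_neq0 (R : realType) (g : quat R) : g <> qzero R ->
  qc1 g ^+ 2 + qc2 g ^+ 2 + qc3 g ^+ 2 + qc4 g ^+ 2 != 0.
Proof.
case: g => c1 c2 c3 c4 /= hg; apply/eqP => h0; apply: hg.
have e1 : c1 = 0 by nra.
have e2 : c2 = 0 by nra.
have e3 : c3 = 0 by nra.
have e4 : c4 = 0 by nra.
by rewrite e1 e2 e3 e4.
Qed.

Lemma inv1 (R : realType) (g x : quat R) : g <> qzero R ->
  qopp (qmul (qinv g) (qopp (qmul g x))) = x.
Proof.
move=> /qnorm2_neq0; case: g => c1 c2 c3 c4; case: x => d1 d2 d3 d4 /= nz.
qunf; congr Quat; field; exact: nz.

Qed.

Lemma inv2 (R : realType) (g h : quat R) : g <> qzero R ->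
  qadd (qmul g (qopp (qmul (qinv g) h))) h = qzero R.
Proof.
move=> /qnorm2_neq0; case: g => c1 c2 c3 c4; case: h => d1 d2 d3 d4 /= nz.
qunf; congr Quat; field; exact: nz.
Qed.

Lemma A1 (R : realType) (g x h : quat R) : qadd (qmul g x) h = qzero R ->
  h = qopp (qmul g x).
Proof.
case: g => c1 c2 c3 c4; case: x => d1 d2 d3 d4; case: h => e1 e2 e3 e4.
qunf => [[E1 E2 E3 E4]]; congr Quat.
- by rewrite -(subr0 e1) -E1; ring.
- by rewrite -(subr0 e2) -E2; ring.
- by rewrite -(subr0 e3) -E3; ring.
- by rewrite -(subr0 e4) -E4; ring.
Qed.

Lemma A0 (R : realType) (x h : quat R) : qadd (qmul (qzero R) x) h = h.
Proof. by case: x; case: h => *; qunf; congr Quat; ring. Qed.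

Lemma key (R : realType) (g : quat R) (r p q s : R) :
  qopp (qmul (qmul (qmul g (qconj g)) g) (qreal (p^+2+q^+2+s^+2))) =
  qmul (qmul (qopp (qmul g (qIm (Quat r p q s)))) (qconj g)) (qopp (qmul g (qIm (Quat r p q s)))).
Proof. by case: g => c1 c2 c3 c4; qunf; congr Quat; ring. Qed.

Theorem mainTheorem17 (R : realType) (n : nat) (a : nat -> quat R) (z0 : quat R) :
  (0 < n)%N ->
  a 0%N <> qzero R ->
  let r0 := qRe z0 in
  let x0 := qIm z0 in
  let N0 := qRe (qopp (qmul x0 x0)) in
  feval n a z0 = qzero R <->
  ((gpol n a r0 N0 = qzero R /\ hpol n a r0 N0 = qzero R) \/
   (gpol n a r0 N0 <> qzero R /\
    qopp (qmul (qmul (qmul (gpol n a r0 N0) (gbarpol n a r0 N0)) (gpol n a r0 N0))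
               (qreal N0))
      = qmul (qmul (hpol n a r0 N0) (gbarpol n a r0 N0)) (hpol n a r0 N0) /\
    x0 = qopp (qmul (qinv (gpol n a r0 N0)) (hpol n a r0 N0)))).
Proof.
case: z0 => r p q s hn _ r0 x0 N0.
have hN : N0 = p^+2+q^+2+s^+2 by rewrite /N0 /x0; qunf; ring.
have hr : r0 = r by [].
rewrite hN hr /x0 decomp // gbar_conj.
set g := gpol n a r _; set h := hpol n a r _.
split.
  move=> E; case: (classic (g = qzero R)) => hg.
    by left; split=> //; rewrite hg A0 in E.
  have hh := A1 E.
  right; split=> //; split.
    by rewrite hh (key g r p q s).
  by rewrite hh inv1.
case=> [[-> ->]|[hg [_ ->]]]; first exact: A0.
exact: inv2.
Qed.
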